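(* Let $A$ be an alphabet and let $w,v\in A^{*}$ with $wv\ne\varepsilon$; put $u=wv$ and $u'=vw$. Then $\rho_{u}=\rho_{u'}$, and hence $S_{u}=S_{u'}$.
   Context: For $u\in A^{+}$, $\langle u\rangle=\{u^{m}:m\ge1\}$ and $\rho_{u}$ is the syntactic congruence of $\langle u\rangle$ on $A^{+}$: for $x,y\in A^{+}$, $x\rho_{u}y$ iff for all $p,q\in A^{*}$, $pxq\in\langle u\rangle\Leftrightarrow pyq\in\langle u\rangle$. $S_{u}=A^{+}/\rho_{u}$. *)

(* Defs.v *)
(* Words over an alphabet A are sequences [seq A];
   A^+ = nonempty sequences, A^* = all sequences, product = concatenation. *)
From mathcomp Require Import all_boot.
Set Implicit Arguments. Unset Strict Implicit. Unset Printing Implicit Defensive.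

Definition wpow (A : Type) (u : seq A) (m : nat) : seq A := flatten (nseq m u).

Definition in_powers (A : Type) (u s : seq A) : Prop :=
  exists m : nat, (1 <= m)%N /\ s = wpow u m.

Definition rho (A : Type) (u x y : seq A) : Prop :=
  forall p q : seq A, in_powers u (p ++ x ++ q) <-> in_powers u (p ++ y ++ q).

(* Main.v *)
Require Import Defs.
From mathcomp Require Import all_boot.

Section Aux.
Variable A : Type.

Lemma catlK (s a b : seq A) : s ++ a = s ++ b -> a = b.
Proof. elim: s => //= x s IH [] ; exact: IH. Qed.

Lemma catrK (s a b : seq A) : a ++ s = b ++ s -> a = b.
Proof.
move=> /(congr1 rev); rewrite !rev_cat => /catlK /(congr1 rev).
by rewrite !revK.
Qed.

Lemma wpowS (u : seq A) m : wpow u m.+1 = u ++ wpow u m.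
Proof. by []. Qed.

Lemma wpow_comm (u : seq A) m : wpow u m ++ u = u ++ wpow u m.
Proof.
elim: m => [|m IH]; first by rewrite /= cats0.
by rewrite wpowS -catA IH.
Qed.

Lemma wpow_shift (w v : seq A) m : w ++ wpow (v ++ w) m = wpow (w ++ v) m ++ w.
Proof.
elim: m => [|m IH]; first by rewrite /= cats0.
by rewrite !wpowS -!catA IH.
Qed.

Lemma wpow_conj (w v : seq A) m : w ++ wpow (v ++ w) m ++ v = wpow (w ++ v) m.+1.
Proof. by rewrite catA wpow_shift -catA wpow_comm. Qed.

Lemma conjL (w v s : seq A) : s <> [::] ->
  (in_powers (v ++ w) s <-> in_powers (w ++ v) (w ++ s ++ v)).
Proof.
move=> sn; split.
- move=> [m [hm ->]]; exists m.+1; split => //.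
  by rewrite wpow_conj.
- move=> [[|k] [hk E]] //.
  have E2 : w ++ s ++ v = w ++ wpow (v ++ w) k ++ v.
    by rewrite E wpow_conj.
  move: E2 => /catlK /catrK Es.
  exists k; split => //; case: k hk E Es => //= _ _ Es; by [].
Qed.

Lemma rho_one (w v x y : seq A) : x <> [::] -> y <> [::] ->
  rho (w ++ v) x y -> rho (v ++ w) x y.
Proof.
move=> xn yn H p q.
have ne : forall z : seq A, z <> [::] -> p ++ z ++ q <> [::].
  by move=> z; case: p => //; case: z.
apply: (iff_trans (conjL w v _ (ne _ xn))).
have -> : w ++ (p ++ x ++ q) ++ v = (w ++ p) ++ x ++ (q ++ v) by rewrite !catA.
apply: (iff_trans (H _ _)).
have -> : (w ++ p) ++ y ++ (q ++ v) = w ++ (p ++ y ++ q) ++ v by rewrite !catA.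
apply: iff_sym; exact: (conjL w v _ (ne _ yn)).
Qed.
End Aux.

Theorem lemma2p4 (A : finType) (w v : seq A) :
  w ++ v <> [::] ->
  forall x y : seq A, x <> [::] -> y <> [::] ->
    (rho (w ++ v) x y <-> rho (v ++ w) x y).
Proof.
move=> _ x y xn yn; split; exact: rho_one.
Qed.
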